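(* Let $\phi$ be the monoid endomorphism of $\{1,-1\}^*$ determined by $\phi(1)=1\,1\,(-1)$ and $\phi(-1)=1\,(-1)\,(-1)$, and let $w_\alpha=\lim_{n\to\infty}\phi^n(1)$ be the infinite sequence over $\{1,-1\}$ obtained by iterating $\phi$ starting from the word $1$ (each $\phi^n(1)$ is a prefix of $\phi^{n+1}(1)$). Then $w_\alpha$ is cube-free, i.e. it contains no factor of the form $uuu$ with $u$ a nonempty finite word. *)

(* Defs.v *)
From mathcomp Require Import all_boot all_order all_algebra.
Set Implicit Arguments. Unset Strict Implicit. Unset Printing Implicit Defensive.
Local Open Scope ring_scope.

(* phi on letters: phi(1) = 1 1 (-1), phi(-1) = 1 (-1) (-1).
   Only the letters 1 and -1 ever occur; other integers are sent to the image of -1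
   (irrelevant, never used). *)
Definition phi_letter (a : int) : seq int :=
  if a == 1 then [:: 1; 1; -1] else [:: 1; -1; -1].

Definition phi (w : seq int) : seq int := flatten (map phi_letter w).

Definition phi_iter (n : nat) : seq int := iter n phi [:: 1].

(* The infinite word w_alpha = lim phi^n(1): its n-th letter (0-indexed) is
   read off phi^(n+1)(1), which has length 3^(n+1) > n; by the prefix property
   this is the common value of all sufficiently long iterates. *)
Definition w_alpha (n : nat) : int := nth 0 (phi_iter n.+1) n.

(* An infinite word w contains a factor uuu with |u| = p >= 1 starting at
   position i iff w (i + k) = w (i + k + p) for all k < 2p. *)
Definition has_cube (w : nat -> int) : Prop :=
  exists i p : nat, (0 < p)%N /\ forall k : nat, (k < 2 * p)%N -> w (i + k)%N = w (i + k + p)%N.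

Definition cube_free (w : nat -> int) : Prop := ~ has_cube w.

(* Main.v *)
Require Import Defs.
From mathcomp Require Import all_boot all_order all_algebra.
From mathcomp Require Import zify.

Local Open Scope ring_scope.

Lemma phi_cat (s t : seq int) : phi (s ++ t) = phi s ++ phi t.
Proof. by rewrite /phi map_cat flatten_cat. Qed.

Lemma size_phi (s : seq int) : size (phi s) = (3 * size s)%N.
Proof.
elim: s => [|a s IH] //=.
rewrite /phi /= size_cat -/(phi s) IH /phi_letter.
case: (a == 1) => /=; lia.
Qed.

Lemma size_iter n : size (phi_iter n) = (3 ^ n)%N.
Proof.
elim: n => [|n IH] //=. by rewrite /phi_iter /= -/(phi_iter n) size_phi IH expnS.
Qed.

Lemma iter_prefix n : exists r, phi_iter n.+1 = phi_iter n ++ r.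
Proof.
elim: n => [|n [r IH]]; first by exists [:: 1; -1].
exists (phi r).
have -> : phi_iter n.+2 = phi (phi_iter n.+1) by [].
by rewrite {1}IH phi_cat.
Qed.

Lemma iter_stable n m k : (n <= m)%N -> (k < 3 ^ n)%N ->
  nth 0 (phi_iter n) k = nth 0 (phi_iter m) k.
Proof.
move=> nm kn; elim: m nm => [|m IH].
  by rewrite leqn0 => /eqP ->.
rewrite leq_eqVlt => /orP [/eqP -> // | ltm].
rewrite IH //; have [r ->] := iter_prefix m.
rewrite nth_cat size_iter.
have : (3 ^ n <= 3 ^ m)%N by rewrite leq_exp2l.
by move=> h; rewrite (leq_trans kn h).
Qed.

Lemma wE N k : (k < 3 ^ N)%N -> w_alpha k = nth 0 (phi_iter N) k.
Proof.
move=> kN; rewrite /w_alpha.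
have k1 : (k < 3 ^ k.+1)%N.
  apply: (@leq_trans (3 ^ k)%N); first exact: ltn_expl.
  by rewrite leq_exp2l.
rewrite (@iter_stable k.+1 (maxn N k.+1)) ?leq_maxr //.
by rewrite (@iter_stable N (maxn N k.+1)) ?leq_maxl.
Qed.

Lemma nth_phi (s : seq int) i j : (j < 3)%N -> (i < size s)%N ->
  nth 0 (phi s) (3 * i + j) = nth 0 (phi_letter (nth 0 s i)) j.
Proof.
move=> j3; elim: s i => [|a s IH] i //= Hi.
rewrite /phi /= -/(phi s) nth_cat.
have -> : size (phi_letter a) = 3%N by rewrite /phi_letter; case: (a == 1).
case: i Hi => [|i] Hi.
  by rewrite muln0 add0n j3.
have -> : (3 * i.+1 + j < 3)%N = false by lia.
have -> : (3 * i.+1 + j - 3 = 3 * i + j)%N by lia.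
by rewrite IH.
Qed.

Lemma w_rec i j : (j < 3)%N ->
  w_alpha (3 * i + j) = nth 0 (phi_letter (w_alpha i)) j.
Proof.
move=> j3.
have h1 : (i < 3 ^ i.+1)%N.
  apply: (@leq_trans (3 ^ i)%N); first exact: ltn_expl.
  by rewrite leq_exp2l.
rewrite (@wE i.+2); last first.
  rewrite expnS; lia.
rewrite (@wE i.+1) // /phi_iter iterS -/(phi_iter i.+1) nth_phi // size_iter //.
Qed.

Lemma W0 n : (n %% 3 = 0)%N -> w_alpha n = 1.
Proof.
move=> h; have -> : n = (3 * (n %/ 3) + 0)%N by lia.
rewrite w_rec //; rewrite /phi_letter; by case: (_ == 1).
Qed.

Lemma W2 n : (n %% 3 = 2)%N -> w_alpha n = -1.
Proof.
move=> h; have -> : n = (3 * (n %/ 3) + 2)%N by lia.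
rewrite w_rec //; rewrite /phi_letter; by case: (_ == 1).
Qed.

Lemma Wpm n : w_alpha n = 1 \/ w_alpha n = -1.
Proof.
elim/ltn_ind: n => n IH.
have [h|[h|h]] : (n %% 3 = 0 \/ n %% 3 = 1 \/ n %% 3 = 2)%N by lia.
- by left; apply: W0.
- have -> : n = (3 * (n %/ 3) + 1)%N by lia.
  rewrite w_rec //; rewrite /phi_letter.
  by case: (_ == 1); [left|right].
- by right; apply: W2.
Qed.

Lemma W1 a : w_alpha (3 * a + 1) = w_alpha a.
Proof.
rewrite w_rec // /phi_letter.
by case: (Wpm a) => ->.
Qed.

Lemma one_neq : (1 : int) <> -1.
Proof. by []. Qed.

Theorem mainTheorem2 : cube_free w_alpha.
Proof.
move=> [i [p [p0 H]]].
elim/ltn_ind: p i p0 H => p IH i p0 H.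
have [h|[h|h]] : (p %% 3 = 0 \/ p %% 3 = 1 \/ p %% 3 = 2)%N by lia.
- set q := (p %/ 3)%N.
  set m0 := ((i + 1) %/ 3)%N.
  apply: (IH q _ m0); try lia.
  move=> k kq.
  have := H (3 * m0 + 1 + 3 * k - i)%N ltac:(lia).
  have -> : (i + (3 * m0 + 1 + 3 * k - i))%N = (3 * (m0 + k) + 1)%N by lia.
  have -> : (3 * (m0 + k) + 1 + p)%N = (3 * (m0 + k + q) + 1)%N by lia.
  by rewrite !W1 -addnA.
- have [r|[r|r]] : (i %% 3 = 0 \/ i %% 3 = 1 \/ i %% 3 = 2)%N by lia.
  + case: (ltnP 1 p) => p1.
      have := H 2%N ltac:(lia).
      rewrite (W2 (i + 2)) ?(W0 (i + 2 + p)); try lia; by move/eqP.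
    have e1 := H 0%N ltac:(lia).
    have e2 := H 1%N ltac:(lia).
    have p1' : p = 1%N by lia.
    have a0 : w_alpha i = 1 by apply: W0.
    have a2 : w_alpha (i + 2) = -1 by apply: W2; lia.
    move: e1 e2; rewrite p1' addn0 -addnA a0 => <-; rewrite a2; by move/eqP.
  + have := H 1%N ltac:(lia).
    rewrite (W2 (i + 1)) ?(W0 (i + 1 + p)); try lia; by move/eqP.
  + have := H 0%N ltac:(lia).
    rewrite (W2 (i + 0)) ?(W0 (i + 0 + p)); try lia; by move/eqP.
- have [r|[r|r]] : (i %% 3 = 0 \/ i %% 3 = 1 \/ i %% 3 = 2)%N by lia.
  + have := H 0%N ltac:(lia).
    rewrite (W0 (i + 0)) ?(W2 (i + 0 + p)); try lia; by move/eqP.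
  + have := H 2%N ltac:(lia).
    rewrite (W0 (i + 2)) ?(W2 (i + 2 + p)); try lia; by move/eqP.
  + have := H 1%N ltac:(lia).
    rewrite (W0 (i + 1)) ?(W2 (i + 1 + p)); try lia; by move/eqP.
Qed.
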